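(* Let $p_N(x)=\prod_{i=1}^N(x-z_i)$ with $z_1,\dots,z_N\in\mathbb{C}$ pairwise distinct, and let $\omega_N=\{x_1,\dots,x_N\}\subset\mathbb{S}^2$ with $\pi_{\mathbb{S}^2}(x_i)=z_i$. Then $$\mathcal{E}_{\log}(\omega_N)-\sum_{i=1}^N\log\mu_{\rm norm}(p_N,z_i)=-N\log\Big(\frac{\sqrt{N(N+1)}}{2}\Big)-N\log\Big(\Big(\int_{\mathbb{S}^2}\prod_{j=1}^N|p-x_j|^2\,d\sigma(p)\Big)^{1/2}\Big),$$ where $\sigma$ is the surface measure on $\mathbb{S}^2$ normalized so that $\sigma(\mathbb{S}^2)=1$.
   Context: $\mathbb{S}^2$ is the unit sphere in $\mathbb{R}^3$; $\pi_{\mathbb{S}^2}(a,b,c)=\frac{a+ib}{1-c}$. $\mathcal{E}_{\log}(\{x_1,\dots,x_N\})=-\sum_{i\ne j}\log\|x_i-x_j\|$. For a root $z$ of a degree-$N$ polynomial $P$, $\mu_{\rm norm}(P,z)=N^{1/2}\|P\|(1+|z|^2)^{N/2-1}/|P'(z)|$, where $\|\sum_{i=0}^N a_iz^i\|=(\sum_i\binom{N}{i}^{-1}|a_i|^2)^{1/2}$ is the Bombieri–Weyl norm. *)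

(* Defs.v *)
From Stdlib Require Import Reals Lra List ClassicalEpsilon.
Open Scope R_scope.

Definition Cx : Type := (R * R)%type.
Definition C0 : Cx := (0, 0).
Definition C1 : Cx := (1, 0).
Definition Cadd (u v : Cx) : Cx := (fst u + fst v, snd u + snd v).
Definition Csub (u v : Cx) : Cx := (fst u - fst v, snd u - snd v).
Definition Cmul (u v : Cx) : Cx :=
  (fst u * fst v - snd u * snd v, fst u * snd v + snd u * fst v).
Definition Cscale (r : R) (u : Cx) : Cx := (r * fst u, r * snd u).
Definition Cnorm2 (u : Cx) : R := fst u ^ 2 + snd u ^ 2.
Definition Cnorm (u : Cx) : R := sqrt (Cnorm2 u).

Fixpoint rsum (n : nat) (f : nat -> R) : R :=
  match n with O => 0 | S m => rsum m f + f m end.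

(* ---------- univariate complex polynomials as coefficient lists,
   lowest degree first: [a_0; a_1; ...; a_N] ---------- *)
Definition Peval (p : list Cx) (z : Cx) : Cx :=
  fold_right (fun a acc => Cadd a (Cmul z acc)) C0 p.

Fixpoint mulXsub_aux (z prev : Cx) (c : list Cx) : list Cx :=
  match c with
  | nil => prev :: nil
  | a :: c' => Csub prev (Cmul z a) :: mulXsub_aux z a c'
  end.
Definition mulXsub (z : Cx) (c : list Cx) : list Cx := mulXsub_aux z C0 c.

Fixpoint prod_roots (N : nat) (z : nat -> Cx) : list Cx :=
  match N with O => C1 :: nil | S m => mulXsub (z m) (prod_roots m z) end.

Fixpoint deriv_aux (k : nat) (c : list Cx) : list Cx :=
  match c with nil => nil | a :: c' => Cscale (INR k) a :: deriv_aux (S k) c' end.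
Definition Pderiv (p : list Cx) : list Cx := deriv_aux 1 (tl p).

Definition bw_norm (N : nat) (p : list Cx) : R :=
  sqrt (rsum (S N) (fun i => Cnorm2 (nth i p C0) / Binomial.C N i)).

Definition mu_norm (N : nat) (P : list Cx) (z : Cx) : R :=
  sqrt (INR N) * bw_norm N P * Rpower (1 + Cnorm2 z) (INR N / 2 - 1)
  / Cnorm (Peval (Pderiv P) z).

Definition R3 : Type := (R * R * R)%type.
Definition on_sphere (x : R3) : Prop :=
  let '(a, b, c) := x in a ^ 2 + b ^ 2 + c ^ 2 = 1.
Definition dist3 (x y : R3) : R :=
  let '(a, b, c) := x in let '(a', b', c') := y in
  sqrt ((a - a') ^ 2 + (b - b') ^ 2 + (c - c') ^ 2).
Definition stereo (x : R3) : Cx :=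
  let '(a, b, c) := x in (a / (1 - c), b / (1 - c)).

Definition E_log (N : nat) (x : nat -> R3) : R :=
  - rsum N (fun i => rsum N (fun j =>
        if Nat.eqb i j then 0 else ln (dist3 (x i) (x j)))).

(* Riemann integral made total (value when f is Riemann integrable on [a,b]) *)
Definition RInt (f : R -> R) (a b : R) : R :=
  epsilon (inhabits 0)
    (fun I => exists pr : Riemann_integrable f a b, RiemannInt pr = I).

(* integral over S^2 w.r.t. the normalized surface measure sigma,
   via spherical coordinates (area element sin(theta) dtheta dphi, total 4 PI) *)
Definition sph (theta phi : R) : R3 :=
  (sin theta * cos phi, sin theta * sin phi, cos theta).
Definition sphere_int (f : R3 -> R) : R :=
  / (4 * PI) *
  RInt (fun phi => RInt (fun theta => f (sph theta phi) * sin theta) 0 PI) 0 (2 * PI).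

Fixpoint rprod (n : nat) (f : nat -> R) : R :=
  match n with O => 1 | S m => rprod m f * f m end.

(* Main.v *)
Require Import Defs.
From Coquelicot Require Import Coquelicot.
From Stdlib Require Import Reals Lra Lia List ClassicalEpsilon.
Require Import Defs.
Open Scope R_scope.

Lemma Ceq (u v : Cx) : fst u = fst v -> snd u = snd v -> u = v.
Proof. destruct u, v; simpl; intros; subst; auto. Qed.

Ltac cxr := apply Ceq; unfold Cadd, Csub, Cmul, Cscale, C0, C1; simpl; ring.

Lemma Peval_aux z prev c w :
  Peval (mulXsub_aux z prev c) w = Cadd prev (Cmul (Csub w z) (Peval c w)).
Proof.
  revert prev; induction c as [|a c IH]; intros prev; simpl.
  - cxr.
  - rewrite IH. cxr.
Qed.

Lemma Peval_mulX z c w : Peval (mulXsub z c) w = Cmul (Csub w z) (Peval c w).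
Proof. unfold mulXsub. rewrite Peval_aux. cxr. Qed.

Lemma deriv_aux_S k c w :
  Peval (deriv_aux (S k) c) w = Cadd (Peval (deriv_aux k c) w) (Peval c w).
Proof.
  revert k; induction c as [|a c IH]; intros k; simpl.
  - cxr.
  - rewrite IH. try rewrite S_INR. destruct k; simpl; cxr.
Qed.

Lemma deriv_aux_mul k z prev c w :
  Peval (deriv_aux k (mulXsub_aux z prev c)) w =
  Cadd (Cscale (INR k) prev)
   (Csub (Cmul w (Peval (deriv_aux (S k) c) w)) (Cmul z (Peval (deriv_aux k c) w))).
Proof.
  revert k prev; induction c as [|a c IH]; intros k prev; simpl.
  - cxr.
  - rewrite IH. repeat rewrite S_INR. destruct k; simpl; cxr.
Qed.

Lemma Pderiv_mulX z c w :
  Peval (Pderiv (mulXsub z c)) w =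
  Cadd (Peval c w) (Cmul (Csub w z) (Peval (Pderiv c) w)).
Proof.
  destruct c as [|a c]; unfold Pderiv, mulXsub; simpl.
  - cxr.
  - rewrite deriv_aux_mul. rewrite deriv_aux_S. cxr.
Qed.

Lemma length_aux z prev c : length (mulXsub_aux z prev c) = S (length c).
Proof. revert prev; induction c; intros; simpl; auto. Qed.

Lemma length_prod N z : length (prod_roots N z) = S N.
Proof. induction N; simpl; auto. unfold mulXsub. rewrite length_aux. auto. Qed.

Lemma last_aux z prev c : c <> nil ->
  nth (length c) (mulXsub_aux z prev c) C0 = nth (pred (length c)) c C0.
Proof.
  revert prev; induction c as [|a c IH]; intros prev H; [congruence|].
  simpl. destruct c as [|b c']; simpl; auto.
  specialize (IH a ltac:(congruence)). simpl in IH. exact IH.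
Qed.

Lemma lead_prod N z : nth N (prod_roots N z) C0 = C1.
Proof.
  induction N; simpl; auto.
  unfold mulXsub. pose proof (length_prod N z) as HL.
  rewrite <- HL at 1. rewrite last_aux. rewrite HL; simpl; auto.
  intro E; rewrite E in HL; discriminate.
Qed.

Lemma Cnorm2_mul u v : Cnorm2 (Cmul u v) = Cnorm2 u * Cnorm2 v.
Proof. unfold Cnorm2, Cmul; simpl; ring. Qed.
Lemma Cnorm2_ge0 u : 0 <= Cnorm2 u.
Proof. unfold Cnorm2; nra. Qed.
Lemma Cnorm2_pos u : u <> C0 -> 0 < Cnorm2 u.
Proof.
  intro H; destruct u as [a b]; unfold Cnorm2; simpl.
  destruct (Req_dec a 0); destruct (Req_dec b 0); subst.
  - exfalso; apply H; reflexivity.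
  - nra. - nra. - nra.
Qed.
Lemma Csub_neq u v : u <> v -> Csub u v <> C0.
Proof.
  intros H E; apply H; destruct u, v; unfold Csub, C0 in E; simpl in E.
  injection E; intros; f_equal; lra.
Qed.

Lemma rprod_ext n f g : (forall i, (i < n)%nat -> f i = g i) -> rprod n f = rprod n g.
Proof. induction n; intros H; simpl; auto. rewrite IHn by (intros; apply H; lia). rewrite H by lia; auto. Qed.
Lemma rsum_ext n f g : (forall i, (i < n)%nat -> f i = g i) -> rsum n f = rsum n g.
Proof. induction n; intros H; simpl; auto. rewrite IHn by (intros; apply H; lia). rewrite H by lia; auto. Qed.

Lemma Peval_prod_root m z i : (i < m)%nat -> Peval (prod_roots m z) (z i) = C0.
Proof.
  induction m; intros H; [lia|]. simpl. rewrite Peval_mulX.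
  destruct (Nat.eq_dec i m).
  - subst. apply Ceq; unfold Cmul, Csub, C0; simpl; ring.
  - rewrite IHm by lia. apply Ceq; unfold Cmul, Csub, C0; simpl; ring.
Qed.

Lemma Cnorm2_Peval_prod m z w :
  Cnorm2 (Peval (prod_roots m z) w) = rprod m (fun j => Cnorm2 (Csub w (z j))).
Proof.
  induction m; simpl.
  - unfold Cnorm2, Defs.C1, C0, Cadd, Cmul; simpl; ring.
  - rewrite Peval_mulX, Cnorm2_mul, IHm; ring.
Qed.

Lemma Cnorm2_deriv m z i : (i < m)%nat ->
  Cnorm2 (Peval (Pderiv (prod_roots m z)) (z i)) =
  rprod m (fun j => if Nat.eqb i j then 1 else Cnorm2 (Csub (z i) (z j))).
Proof.
  induction m; intros H; [lia|]. simpl. rewrite Pderiv_mulX.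
  destruct (Nat.eq_dec i m).
  - subst. rewrite Nat.eqb_refl.
    replace (Cadd (Peval (prod_roots m z) (z m))
        (Cmul (Csub (z m) (z m)) (Peval (Pderiv (prod_roots m z)) (z m))))
      with (Peval (prod_roots m z) (z m))
      by (apply Ceq; unfold Cadd, Cmul, Csub; simpl; ring).
    rewrite Cnorm2_Peval_prod. rewrite Rmult_1_r. apply rprod_ext.
    intros j Hj. destruct (Nat.eqb_spec m j); [lia|auto].
  - rewrite Peval_prod_root by lia.
    replace (Cadd C0 (Cmul (Csub (z i) (z m)) (Peval (Pderiv (prod_roots m z)) (z i))))
      with (Cmul (Csub (z i) (z m)) (Peval (Pderiv (prod_roots m z)) (z i)))
      by (apply Ceq; unfold Cadd, Cmul, Csub, C0; simpl; ring).
    rewrite Cnorm2_mul, IHm by lia.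
    destruct (Nat.eqb_spec i m); [lia|]. ring.
Qed.

Definition invst (z : Cx) : R3 :=
  (2 * fst z / (1 + Cnorm2 z), 2 * snd z / (1 + Cnorm2 z), (Cnorm2 z - 1) / (Cnorm2 z + 1)).

Lemma invst_stereo x : on_sphere x -> x <> (0,0,1) -> x = invst (stereo x).
Proof.
  destruct x as [[a b] c]. unfold on_sphere, stereo, invst, Cnorm2; cbn [fst snd]. intros Hs Hn.
  assert (Hc : c < 1).
  { destruct (Rlt_dec c 1); auto. exfalso. assert (c = 1) by nra.
    subst. assert (a = 0) by nra. assert (b = 0) by nra. subst; apply Hn; auto. }
  assert (Hd : 1 - c <> 0) by lra.
  assert (E : (a / (1 - c)) ^ 2 + (b / (1 - c)) ^ 2 = (1 + c) / (1 - c)).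
  { replace ((a / (1 - c)) ^ 2 + (b / (1 - c)) ^ 2) with ((a^2+b^2)/(1-c)^2) by (field; auto).
    replace (a^2+b^2) with (1 - c^2) by lra. field; auto. }
  rewrite E. f_equal; [f_equal|]; field; lra.
Qed.

Lemma dist3_sq x y : dist3 x y ^ 2 =
  let '(a, b, c) := x in let '(a', b', c') := y in
  ((a - a') ^ 2 + (b - b') ^ 2 + (c - c') ^ 2).
Proof.
  destruct x as [[a b] c], y as [[a' b'] c']; unfold dist3.
  rewrite pow2_sqrt; auto. pose proof (pow2_ge_0 (a-a')); pose proof (pow2_ge_0 (b-b')); pose proof (pow2_ge_0 (c-c')); lra.
Qed.

Lemma dist_invst z w :
  dist3 (invst z) (invst w) ^ 2 = 4 * Cnorm2 (Csub z w) / ((1 + Cnorm2 z) * (1 + Cnorm2 w)).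
Proof.
  rewrite dist3_sq. unfold invst. destruct z as [p q], w as [r s]; unfold Cnorm2, Csub; cbn [fst snd].
  field. split; nra.
Qed.

Lemma RInt_link f a b v : is_RInt f a b v -> Defs.RInt f a b = v.
Proof.
  intros H. assert (Hex : ex_RInt f a b) by (exists v; auto).
  pose proof (ex_RInt_Reals_0 f a b Hex) as pr.
  unfold Defs.RInt.
  destruct (epsilon_spec (inhabits 0)
     (fun I => exists pr : Riemann_integrable f a b, RiemannInt pr = I)) as [pr' Hpr'].
  { exists (RiemannInt pr), pr; auto. }
  rewrite <- Hpr'. rewrite <- RInt_Reals. apply is_RInt_unique; auto.
Qed.

Lemma isR_plus (f g : R -> R) a b (u v : R) : is_RInt f a b u -> is_RInt g a b v ->
  is_RInt (fun x => f x + g x) a b (u + v).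
Proof. intros; apply (is_RInt_plus f g); auto. Qed.
Lemma isR_minus (f g : R -> R) a b (u v : R) : is_RInt f a b u -> is_RInt g a b v ->
  is_RInt (fun x => f x - g x) a b (u - v).
Proof. intros; apply (is_RInt_minus f g); auto. Qed.
Lemma isR_scal (f : R -> R) a b k (u : R) : is_RInt f a b u ->
  is_RInt (fun x => k * f x) a b (k * u).
Proof. intros; apply (is_RInt_scal f); auto. Qed.
Lemma isR_const a b (v : R) : is_RInt (fun _ => v) a b ((b - a) * v).
Proof. apply (is_RInt_const a b v). Qed.
Lemma isR_ext (f g : R -> R) a b (v : R) : (forall x, f x = g x) -> is_RInt f a b v -> is_RInt g a b v.
Proof. intros H; apply is_RInt_ext; intros; auto. Qed.

Lemma isR_rsum n (f : nat -> R -> R) a b (v : nat -> R) :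
  (forall k, (k < n)%nat -> is_RInt (f k) a b (v k)) ->
  is_RInt (fun x => rsum n (fun k => f k x)) a b (rsum n v).
Proof.
  induction n; intros H; simpl.
  - pose proof (isR_const a b 0) as H0; rewrite Rmult_0_r in H0; exact H0.
  - apply isR_plus; [apply IHn; intros; apply H; lia | apply H; lia].
Qed.

Lemma isR_deriv (F f : R -> R) a b :
  (forall x, is_derive F x (f x)) -> (forall x, ex_derive f x) ->
  is_RInt f a b (F b - F a).
Proof.
  intros H1 H2. apply (is_RInt_derive F f); intros; auto.
  apply (ex_derive_continuous (K:=R_AbsRing) (V:=R_NormedModule)); auto.
Qed.

Lemma sin_half x : sin x = 2 * sin (x * / 2) * cos (x * / 2).
Proof. rewrite <- sin_2a. f_equal; field. Qed.
Lemma cos_half x : cos x = cos (x * / 2) ^ 2 - sin (x * / 2) ^ 2.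
Proof. replace (cos x) with (cos (2 * (x * /2))) by (f_equal; field). rewrite cos_2a. ring. Qed.

Definition Jf (k m : nat) (t : R) : R :=
  cos (t / 2) ^ k * sin (t / 2) ^ m * (cos (t / 2) ^ k * sin (t / 2) ^ m) * sin t.

Lemma cosPI2' : cos (PI * / 2) = 0.
Proof. replace (PI * / 2) with (PI / 2) by (unfold Rdiv; auto). apply cos_PI2. Qed.
Lemma sin0' : sin (0 * / 2) = 0.
Proof. rewrite Rmult_0_l. apply sin_0. Qed.
Lemma cos0' : cos (0 * / 2) = 1.
Proof. rewrite Rmult_0_l. apply cos_0. Qed.

Lemma Jf_base k : is_RInt (Jf k 0) 0 PI (2 / (INR k + 1)).
Proof.
  pose (h := fun t => - (2 / (INR k + 1)) * cos (t / 2) ^ (k + k + 2)).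
  assert (E : 2 / (INR k + 1) = h PI - h 0).
  { unfold h. replace (PI / 2) with (PI * / 2) by reflexivity. replace (0 / 2) with (0 * / 2) by reflexivity. rewrite cosPI2', cos0', pow1, pow_i by lia. field.
    pose proof (pos_INR k); lra. }
  rewrite E. apply (isR_deriv h (Jf k 0)).
  - intros x. unfold h, Jf. auto_derive; auto.
    replace (Init.Nat.pred (k + k + 2)) with (k + k + 1)%nat by lia.
    rewrite (sin_half x). rewrite !pow_add. rewrite !plus_INR. simpl. unfold Rdiv. field.
    pose proof (pos_INR k); lra.
  - intros x. unfold Jf. auto_derive; auto.
Qed.

Lemma Jf_step k m v : is_RInt (Jf (S k) m) 0 PI v ->
  is_RInt (Jf k (S m)) 0 PI ((INR m + 1) / (INR k + 1) * v).
Proof.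
  intros Hv.
  pose (g := fun t => cos (t / 2) ^ (k + k + 2) * sin (t / 2) ^ (m + m + 2)).
  pose (gd := fun t => - (INR k + 1) / 2 * Jf k (S m) t + (INR m + 1) / 2 * Jf (S k) m t).
  assert (Hg : is_RInt gd 0 PI (g PI - g 0)).
  { apply isR_deriv.
    - intros x. unfold g, gd, Jf. auto_derive; auto.
      replace (Init.Nat.pred (k + k + 2)) with (k + k + 1)%nat by lia.
      replace (Init.Nat.pred (m + m + 2)) with (m + m + 1)%nat by lia.
      rewrite (sin_half x). rewrite !pow_add. rewrite !plus_INR. simpl. unfold Rdiv. field.
    - intros x. unfold gd, Jf. auto_derive; auto. }
  assert (Eg : g PI - g 0 = 0).
  { unfold g. replace (PI / 2) with (PI * / 2) by reflexivity.
    replace (0 / 2) with (0 * / 2) by reflexivity. rewrite cosPI2', sin0'.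
    rewrite !pow_i by lia. ring. }
  rewrite Eg in Hg.
  assert (Hk : INR k + 1 <> 0) by (pose proof (pos_INR k); lra).
  pose proof (isR_minus _ _ _ _ _ _ (isR_scal _ _ _ ((INR m + 1) / (INR k + 1)) _ Hv)
               (isR_scal _ _ _ (2 / (INR k + 1)) _ Hg)) as H.
  replace ((INR m + 1) / (INR k + 1) * v) with ((INR m + 1) / (INR k + 1) * v - 2 / (INR k + 1) * 0) by ring.
  revert H. apply isR_ext. intros x. unfold gd. field. auto.
Qed.

Lemma Jf_val m : forall k, is_RInt (Jf k m) 0 PI
  (2 * INR (Factorial.fact k) * INR (Factorial.fact m) / INR (Factorial.fact (k + m + 1))).
Proof.
  induction m; intros k.
  - replace (k + 0 + 1)%nat with (S k) by lia. rewrite fact_simpl, mult_INR, S_INR.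
    replace (2 * INR (Factorial.fact k) * INR (Factorial.fact 0) / ((INR k + 1) * INR (Factorial.fact k))) with (2 / (INR k + 1)).
    + apply Jf_base.
    + simpl. field. split; [apply INR_fact_neq_0 | pose proof (pos_INR k); lra].
  - pose proof (Jf_step k m _ (IHm (S k))) as H.
    replace (S k + m + 1)%nat with (k + S m + 1)%nat in H by lia.
    revert H. match goal with |- is_RInt _ _ _ ?a -> is_RInt _ _ _ ?b => replace b with a end; auto.
    rewrite !fact_simpl, !mult_INR, !S_INR. field.
    split; [apply INR_fact_neq_0 | pose proof (pos_INR k); lra].
Qed.

Definition ek (k : nat) (t : R) : Cx := (cos (INR k * t), sin (INR k * t)).
Definition Rf (a b : Cx) (k l : nat) (t : R) : R :=
  fst (Cmul a (ek k t)) * fst (Cmul b (ek l t)) + snd (Cmul a (ek k t)) * snd (Cmul b (ek l t)).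

Lemma sin_2kPI k : sin (2 * INR k * PI) = 0.
Proof. pose proof (sin_period 0 k). rewrite Rplus_0_l, sin_0 in H. auto. Qed.
Lemma cos_2kPI k : cos (2 * INR k * PI) = 1.
Proof. pose proof (cos_period 0 k). rewrite Rplus_0_l, cos_0 in H. auto. Qed.

Lemma Rf_eq a b k l t : Rf a b k l t =
  (fst a * fst b + snd a * snd b) * cos ((INR k - INR l) * t)
  + (fst a * snd b - snd a * fst b) * sin ((INR k - INR l) * t).
Proof.
  unfold Rf, ek, Cmul; cbn [fst snd].
  replace ((INR k - INR l) * t) with (INR k * t - INR l * t) by ring.
  rewrite cos_minus, sin_minus. ring.
Qed.

Lemma Rf_int a b k l : is_RInt (Rf a b k l) 0 (2 * PI)
  (if Nat.eqb k l then 2 * PI * (fst a * fst b + snd a * snd b) else 0).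
Proof.
  set (A := fst a * fst b + snd a * snd b).
  set (B := fst a * snd b - snd a * fst b).
  destruct (Nat.eqb_spec k l).
  - subst. apply (isR_ext (fun _ => A)).
    + intros x. rewrite Rf_eq. replace (INR l - INR l) with 0 by ring.
      rewrite Rmult_0_l, cos_0, sin_0. unfold A; ring.
    + pose proof (isR_const 0 (2 * PI) A) as H. rewrite Rminus_0_r in H. exact H.
  - set (m := INR k - INR l).
    assert (Hm : m <> 0).
    { unfold m; intro E. apply n. apply INR_eq. lra. }
    pose (F := fun t => (A * sin (m * t) - B * cos (m * t)) / m).
    assert (E : 0 = F (2 * PI) - F 0).
    { unfold F. rewrite Rmult_0_r, sin_0, cos_0.
      replace (m * (2 * PI)) with (2 * INR k * PI - 2 * INR l * PI) by (unfold m; ring).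
      rewrite sin_minus, cos_minus, !sin_2kPI, !cos_2kPI. field; auto. }
    assert (H : is_RInt (Rf a b k l) 0 (2 * PI) (F (2 * PI) - F 0)).
    2:{ rewrite <- E in H. exact H. }
    apply isR_deriv.
    + intros x. unfold F. auto_derive; auto.
      rewrite Rf_eq. unfold A, B, m in *. field; auto.
    + intros x. unfold Rf, ek, Cmul. cbn [fst snd]. auto_derive; auto.
Qed.

Lemma rsum_plus n f g : rsum n (fun k => f k + g k) = rsum n f + rsum n g.
Proof. induction n; cbn [rsum rprod]; [ring|rewrite IHn; ring]. Qed.
Lemma rsum_minus n f g : rsum n (fun k => f k - g k) = rsum n f - rsum n g.
Proof. induction n; cbn [rsum rprod]; [ring|rewrite IHn; ring]. Qed.
Lemma rsum_scal n c f : rsum n (fun k => c * f k) = c * rsum n f.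
Proof. induction n; cbn [rsum rprod]; [ring|rewrite IHn; ring]. Qed.
Lemma rsum_const n c : rsum n (fun _ => c) = INR n * c.
Proof. induction n; cbn [rsum rprod]; [simpl; ring|rewrite IHn, S_INR; ring]. Qed.
Lemma rsum_shift n f : rsum (S n) f = f 0%nat + rsum n (fun k => f (S k)).
Proof. induction n; cbn [rsum rprod] in *; [ring|rewrite IHn; ring]. Qed.
Lemma rsum_mul n f g : rsum n f * rsum n g = rsum n (fun k => rsum n (fun l => f k * g l)).
Proof.
  assert (M : forall G, rsum n f * G = rsum n (fun k => f k * G)).
  { intros G; induction n; cbn [rsum]; [ring|rewrite <- IHn; ring]. }
  rewrite M. apply rsum_ext; intros k _. rewrite rsum_scal; auto.
Qed.
Lemma rsum_delta n i f : (i < n)%nat -> rsum n (fun j => if Nat.eqb i j then f j else 0) = f i.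
Proof.
  induction n; intros H; [lia|]. cbn [rsum rprod]. destruct (Nat.eqb_spec i n).
  - subst. rewrite (rsum_ext n _ (fun _ => 0)).
    + rewrite rsum_const; ring.
    + intros j Hj. destruct (Nat.eqb_spec n j); [lia|auto].
  - rewrite IHn by lia. ring.
Qed.
Lemma rprod_mul n f g : rprod n (fun k => f k * g k) = rprod n f * rprod n g.
Proof. induction n; cbn [rsum rprod]; [ring|rewrite IHn; ring]. Qed.

Fixpoint CPw (u : Cx) (n : nat) : Cx :=
  match n with O => Defs.C1 | S m => Cmul u (CPw u m) end.

Fixpoint Hev (l : list Cx) (u v : Cx) : Cx :=
  match l with nil => C0 | a :: l' => Cadd (Cmul a (CPw v (length l'))) (Cmul u (Hev l' u v)) end.

Lemma Hev_aux z prev c u v :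
  Hev (mulXsub_aux z prev c) u v =
  Cadd (Cmul prev (CPw v (length c))) (Cmul (Csub u (Cmul z v)) (Hev c u v)).
Proof.
  revert prev; induction c as [|a c IH]; intros prev; simpl.
  - cxr.
  - rewrite length_aux, IH. simpl. cxr.
Qed.

Lemma Hev_prod N z u v :
  Cnorm2 (Hev (prod_roots N z) u v) = rprod N (fun j => Cnorm2 (Csub u (Cmul (z j) v))).
Proof.
  induction N; simpl.
  - unfold Cnorm2; simpl; ring.
  - unfold mulXsub. rewrite Hev_aux. simpl length.
    replace (Cadd (Cmul C0 (CPw v (length (prod_roots N z))))
      (Cmul (Csub u (Cmul (z N) v)) (Hev (prod_roots N z) u v)))
      with (Cmul (Csub u (Cmul (z N) v)) (Hev (prod_roots N z) u v)) by cxr.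
    rewrite Cnorm2_mul, IHN. ring.
Qed.

Definition Csum (n : nat) (f : nat -> Cx) : Cx :=
  (rsum n (fun k => fst (f k)), rsum n (fun k => snd (f k))).

Lemma Csum_shift n f : Csum (S n) f = Cadd (f 0%nat) (Csum n (fun k => f (S k))).
Proof. unfold Csum, Cadd. rewrite !rsum_shift. reflexivity. Qed.
Lemma Csum_mul u n f : Cmul u (Csum n f) = Csum n (fun k => Cmul u (f k)).
Proof.
  unfold Csum, Cmul; cbn [fst snd]. f_equal.
  - rewrite <- !rsum_scal, <- rsum_minus. apply rsum_ext; intros; cbn [fst snd]; ring.
  - rewrite <- !rsum_scal, <- rsum_plus. apply rsum_ext; intros; cbn [fst snd]; ring.
Qed.
Lemma Csum_ext n f g : (forall k, (k < n)%nat -> f k = g k) -> Csum n f = Csum n g.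
Proof. intros H; unfold Csum; f_equal; apply rsum_ext; intros; rewrite H; auto. Qed.

Lemma Hev_sum l u v : Hev l u v =
  Csum (length l) (fun k => Cmul (nth k l C0) (Cmul (CPw u k) (CPw v (length l - 1 - k)))).
Proof.
  induction l as [|a l IH]; cbn [Hev length].
  - unfold Csum; simpl. reflexivity.
  - rewrite IH, Csum_shift, Csum_mul. f_equal.
    + replace (S (length l) - 1 - 0)%nat with (length l) by lia. cbn [nth CPw]. cxr.
    + apply Csum_ext; intros k Hk.
      replace (S (length l) - 1 - S k)%nat with (length l - 1 - k)%nat by lia.
      cbn [nth CPw]. cxr.
Qed.
Lemma rsum_mulr n f c : rsum n f * c = rsum n (fun k => f k * c).
Proof. induction n; cbn [rsum]; [ring|rewrite <- IHn; ring]. Qed.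

Lemma sin_half2 x : sin x = 2 * sin (x / 2) * cos (x / 2).
Proof. unfold Rdiv; apply sin_half. Qed.
Lemma cos_half2 x : cos x = cos (x / 2) ^ 2 - sin (x / 2) ^ 2.
Proof. unfold Rdiv; apply cos_half. Qed.

Lemma CPw_polar r t k : CPw (r * cos t, r * sin t) k = (r ^ k * cos (INR k * t), r ^ k * sin (INR k * t)).
Proof.
  induction k; cbn [CPw].
  - simpl INR. rewrite Rmult_0_l, cos_0, sin_0. unfold Defs.C1. f_equal; ring.
  - rewrite IHk, S_INR. unfold Cmul; cbn [fst snd].
    replace ((INR k + 1) * t) with (t + INR k * t) by ring.
    rewrite cos_plus, sin_plus. simpl pow. f_equal; ring.
Qed.
Lemma CPw_real s n : CPw (s, 0) n = (s ^ n, 0).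
Proof. induction n; cbn [CPw]; auto. rewrite IHn. unfold Cmul; cbn [fst snd]. simpl pow. f_equal; ring. Qed.

Lemma dist_sph z t p :
  dist3 (sph t p) (invst z) ^ 2 = 4 / (1 + Cnorm2 z) *
    Cnorm2 (Csub (cos (t/2) * cos p, cos (t/2) * sin p) (Cmul z (sin (t/2), 0))).
Proof.
  rewrite dist3_sq. unfold sph, invst. rewrite (sin_half2 t), (cos_half2 t).
  pose proof (sin2_cos2 (t/2)) as H1. pose proof (sin2_cos2 p) as H2.
  set (c := cos (t/2)) in *. set (s := sin (t/2)) in *.
  set (C := cos p) in *. set (S := sin p) in *. clearbody c s C S.
  destruct z as [zx zy]. unfold Cnorm2, Csub, Cmul; cbn [fst snd].
  assert (HD : 1 + (zx ^ 2 + zy ^ 2) <> 0) by nra.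
  match goal with |- ?L = ?R =>
    assert (E : L - R = (c^2+s^2-1)^2 + (C^2+S^2-1) * (4*s^2*c^2 - 4*c^2/(1 + (zx ^ 2 + zy ^ 2))))
  end.
  { field. auto. }
  unfold Rsqr in *. assert (c^2+s^2-1 = 0) by nra. assert (C^2+S^2-1 = 0) by nra.
  rewrite H, H0 in E. lra.
Qed.

Definition T (N k l : nat) (t : R) : R :=
  cos (t/2) ^ k * sin (t/2) ^ (N - k) * (cos (t/2) ^ l * sin (t/2) ^ (N - l)) * sin t.
Definition Kc N (z : nat -> Cx) := rprod N (fun j => 4 / (1 + Cnorm2 (z j))).
Definition ac N z k := nth k (prod_roots N z) C0.

Lemma sq_mul (X : R) : X ^ 2 = X * X.
Proof. ring. Qed.

Lemma integrand N z x t p (Hx : forall j, (j < N)%nat -> x j = invst (z j)) :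
  rprod N (fun j => dist3 (sph t p) (x j) ^ 2) * sin t =
  Kc N z * rsum (S N) (fun k => rsum (S N) (fun l => Rf (ac N z k) (ac N z l) k l p * T N k l t)).
Proof.
  rewrite (rprod_ext _ _ (fun j => 4 / (1 + Cnorm2 (z j)) *
    Cnorm2 (Csub (cos (t/2) * cos p, cos (t/2) * sin p) (Cmul (z j) (sin (t/2), 0)))))
    by (intros j Hj; rewrite Hx by auto; apply dist_sph).
  rewrite rprod_mul, <- Hev_prod, Hev_sum, length_prod. fold (Kc N z).
  rewrite Rmult_assoc. f_equal.
  unfold Cnorm2, Csum; cbn [fst snd]. rewrite !sq_mul, !rsum_mul.
  rewrite <- rsum_plus. rewrite Rmult_comm, <- rsum_scal. apply rsum_ext; intros k Hk.
  rewrite <- rsum_plus, <- rsum_scal. apply rsum_ext; intros l Hl.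
  rewrite !CPw_polar, !CPw_real.
  replace (S N - 1 - k)%nat with (N - k)%nat by lia.
  replace (S N - 1 - l)%nat with (N - l)%nat by lia.
  unfold Rf, ek, Cmul, T, ac; cbn [fst snd]. ring.
Qed.

Definition M N k l := Coquelicot.RInt.RInt (T N k l) 0 PI.

Lemma T_int N k l : is_RInt (T N k l) 0 PI (M N k l).
Proof.
  apply (RInt_correct (V:=R_CompleteNormedModule)). apply (ex_RInt_continuous (V:=R_CompleteNormedModule)).
  intros x _. apply (ex_derive_continuous (K:=R_AbsRing) (V:=R_NormedModule)).
  unfold T. auto_derive. auto.
Qed.

Lemma M_diag N k : (k <= N)%nat ->
  M N k k = 2 * INR (Factorial.fact k) * INR (Factorial.fact (N - k)) / INR (Factorial.fact (N + 1)).
Proof.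
  intros H. unfold M. apply is_RInt_unique.
  replace (N + 1)%nat with (k + (N - k) + 1)%nat by lia. apply (Jf_val (N - k) k).
Qed.

Lemma sphere_int_val N z x (Hx : forall j, (j < N)%nat -> x j = invst (z j)) :
  sphere_int (fun p => rprod N (fun j => dist3 p (x j) ^ 2)) =
  Kc N z * rsum (S N) (fun k => Cnorm2 (ac N z k) / Binomial.C N k) / (INR N + 1).
Proof.
  set (G := fun p => Kc N z * rsum (S N) (fun k => rsum (S N) (fun l =>
               Rf (ac N z k) (ac N z l) k l p * M N k l))).
  assert (Hin : forall p, Defs.RInt (fun t => rprod N (fun j => dist3 (sph t p) (x j) ^ 2) * sin t) 0 PI = G p).
  { intros p. apply RInt_link. unfold G.
    apply (isR_ext (fun t => Kc N z * rsum (S N) (fun k => rsum (S N) (fun l =>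
               Rf (ac N z k) (ac N z l) k l p * T N k l t)))).
    { intros t. symmetry. apply integrand; auto. }
    apply isR_scal.
    apply (isR_rsum (S N) (fun k t => rsum (S N) (fun l => Rf (ac N z k) (ac N z l) k l p * T N k l t))).
    intros k _.
    apply (isR_rsum (S N) (fun l t => Rf (ac N z k) (ac N z l) k l p * T N k l t)).
    intros l _. apply isR_scal. apply T_int. }
  unfold sphere_int.
  rewrite (RInt_link _ 0 (2 * PI)
    (Kc N z * rsum (S N) (fun k => rsum (S N) (fun l =>
        (if Nat.eqb k l then 2 * PI * (fst (ac N z k) * fst (ac N z l) + snd (ac N z k) * snd (ac N z l)) else 0)
        * M N k l)))).
  2:{ apply (isR_ext G). { intros p. rewrite Hin. auto. }
      unfold G. apply isR_scal.
      apply (isR_rsum (S N) (fun k p => rsum (S N) (fun l => Rf (ac N z k) (ac N z l) k l p * M N k l))).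
      intros k _.
      apply (isR_rsum (S N) (fun l p => Rf (ac N z k) (ac N z l) k l p * M N k l)).
      intros l _.
      apply (isR_ext (fun p => M N k l * Rf (ac N z k) (ac N z l) k l p)).
      { intros; ring. }
      match goal with |- is_RInt _ _ _ (?A * ?B) => replace (A * B) with (B * A) by ring end.
      apply isR_scal. apply Rf_int. }
  rewrite (rsum_ext (S N) _ (fun k => 2 * PI * Cnorm2 (ac N z k) * M N k k)).
  2:{ intros k Hk.
      rewrite (rsum_ext (S N) _ (fun l => if Nat.eqb k l then
         2 * PI * (fst (ac N z k) * fst (ac N z l) + snd (ac N z k) * snd (ac N z l)) * M N k l else 0)).
      - rewrite rsum_delta by auto. unfold Cnorm2. ring.
      - intros l _. destruct (Nat.eqb k l); ring. }
  rewrite <- (rsum_scal _ (Kc N z)).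
  rewrite <- rsum_scal. unfold Rdiv. rewrite <- rsum_scal, rsum_mulr.
  apply rsum_ext; intros k Hk. rewrite M_diag by lia.
  unfold Binomial.C. replace (N + 1)%nat with (S N) by lia.
  rewrite fact_simpl, mult_INR, S_INR.
  pose proof (INR_fact_neq_0 k). pose proof (INR_fact_neq_0 (N - k)). pose proof (INR_fact_neq_0 N).
  pose proof PI_RGT_0. pose proof (pos_INR N).
  field. repeat split; lra.
Qed.

Lemma ln_sqrt' x : 0 < x -> ln (sqrt x) = / 2 * ln x.
Proof.
  intros H. assert (Hs : 0 < sqrt x) by (apply sqrt_lt_R0; auto).
  replace (ln x) with (ln (sqrt x ^ 2)) by (rewrite pow2_sqrt; lra).
  rewrite ln_pow by auto. simpl INR. field.
Qed.
Lemma ln_div' x y : 0 < x -> 0 < y -> ln (x / y) = ln x - ln y.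
Proof. intros; unfold Rdiv; rewrite ln_mult, ln_Rinv; try lra. apply Rinv_0_lt_compat; auto. Qed.

Lemma rsum_ge0 n f : (forall i, (i < n)%nat -> 0 <= f i) -> 0 <= rsum n f.
Proof. induction n; intros H; cbn [rsum]; [lra|]. pose proof (H n ltac:(lia)). pose proof (IHn ltac:(intros; apply H; lia)). lra. Qed.
Lemma rprod_pos n f : (forall i, (i < n)%nat -> 0 < f i) -> 0 < rprod n f.
Proof. induction n; intros H; cbn [rprod]; [lra|]. apply Rmult_lt_0_compat; [apply IHn; intros; apply H; lia| apply H; lia]. Qed.
Lemma ln_rprod n f : (forall i, (i < n)%nat -> 0 < f i) -> ln (rprod n f) = rsum n (fun i => ln (f i)).
Proof.
  induction n; intros H; cbn [rprod rsum]; [apply ln_1|].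
  rewrite ln_mult, IHn; auto; try (apply rprod_pos; intros; apply H; lia); apply H; lia.
Qed.
Lemma lin3 n a b c f g : rsum n (fun i => a + b * f i + c * g i) = INR n * a + b * rsum n f + c * rsum n g.
Proof. rewrite !rsum_plus, !rsum_scal, rsum_const. ring. Qed.

Lemma binC_pos N k : 0 < Binomial.C N k.
Proof.
  unfold Binomial.C. apply Rdiv_lt_0_compat. apply INR_fact_lt_0.
  apply Rmult_lt_0_compat; apply INR_fact_lt_0.
Qed.

Lemma bw_pos N z : 0 < bw_norm N (prod_roots N z).
Proof.
  unfold bw_norm. apply sqrt_lt_R0. cbn [rsum].
  assert (0 <= rsum N (fun i => Cnorm2 (nth i (prod_roots N z) C0) / Binomial.C N i)).
  { apply rsum_ge0; intros. apply Rdiv_le_0_compat; [apply Cnorm2_ge0|apply binC_pos]. }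
  rewrite lead_prod. change (Cnorm2 Defs.C1) with (1 ^ 2 + 0 ^ 2).
  assert (0 < (1 ^ 2 + 0 ^ 2) / Binomial.C N N) by (apply Rdiv_lt_0_compat; [lra|apply binC_pos]).
  lra.
Qed.

Lemma bw_sq N z : bw_norm N (prod_roots N z) ^ 2 = rsum (S N) (fun k => Cnorm2 (ac N z k) / Binomial.C N k).
Proof.
  unfold bw_norm, ac. rewrite pow2_sqrt; auto.
  apply rsum_ge0; intros. apply Rdiv_le_0_compat; [apply Cnorm2_ge0|apply binC_pos].
Qed.

Lemma dist3_ge0 a b : 0 <= dist3 a b.
Proof. destruct a as [[? ?] ?], b as [[? ?] ?]; unfold dist3; apply sqrt_pos. Qed.
Lemma ln4 : ln 4 = 2 * ln 2.
Proof. replace 4 with (2 * 2) by ring. rewrite ln_mult by lra. ring. Qed.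
Lemma opz z : 0 < 1 + Cnorm2 z.
Proof. pose proof (Cnorm2_ge0 z); lra. Qed.

Theorem lemma3p3 (N : nat) (z : nat -> Cx) (x : nat -> R3)
  (Hdist : forall i j, (i < N)%nat -> (j < N)%nat -> i <> j -> z i <> z j)
  (Hsph : forall i, (i < N)%nat -> on_sphere (x i))
  (Hnp : forall i, (i < N)%nat -> x i <> (0, 0, 1))
  (Hproj : forall i, (i < N)%nat -> stereo (x i) = z i) :
  E_log N x - rsum N (fun i => ln (mu_norm N (prod_roots N z) (z i)))
  = - INR N * ln (sqrt (INR N * (INR N + 1)) / 2)
    - INR N * ln (sqrt (sphere_int
                          (fun p => rprod N (fun j => dist3 p (x j) ^ 2)))).
Proof.
  destruct (Nat.eq_dec N 0) as [HN0|HN0].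
  { subst. unfold E_log. cbn [rsum INR]. ring. }
  assert (HNp : 0 < INR N) by (apply lt_0_INR; lia).
  assert (Hx : forall j, (j < N)%nat -> x j = invst (z j)).
  { intros j Hj. rewrite <- (Hproj j Hj). apply invst_stereo; auto. }
  set (L := fun j => ln (1 + Cnorm2 (z j))).
  set (dd := fun i j => ln (Cnorm2 (Csub (z i) (z j)))).
  set (D := fun i => rsum N (fun j => if Nat.eqb i j then 0 else dd i j)).
  set (B := bw_norm N (prod_roots N z)).
  set (SL := rsum N L).
  assert (HB : 0 < B) by apply bw_pos.
  assert (F1 : forall i j, (i < N)%nat -> (j < N)%nat -> i <> j ->
     ln (dist3 (x i) (x j)) = / 2 * (ln 4 + dd i j - L i - L j)).
  { intros i j Hi Hj Hij. rewrite !Hx by auto.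
    pose proof (dist_invst (z i) (z j)) as Hd.
    pose proof (Cnorm2_pos _ (Csub_neq _ _ (Hdist i j Hi Hj Hij))) as Hp.
    pose proof (opz (z i)). pose proof (opz (z j)).
    set (d := dist3 (invst (z i)) (invst (z j))) in *.
    assert (Hd2 : 0 < d ^ 2).
    { rewrite Hd. apply Rdiv_lt_0_compat; [lra|]. apply Rmult_lt_0_compat; lra. }
    assert (Hdp : 0 < d).
    { pose proof (dist3_ge0 (invst (z i)) (invst (z j))). fold d in H1.
      destruct (Req_dec d 0); [rewrite H2 in Hd2; simpl in Hd2; lra | lra]. }
    assert (E : ln d = / 2 * ln (d ^ 2)) by (rewrite ln_pow by auto; simpl INR; field).
    rewrite E, Hd. rewrite ln_div', ln_mult, ln_mult; try lra.
    unfold dd, L. field. apply Rmult_lt_0_compat; lra. }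
  assert (F2 : forall i, (i < N)%nat -> ln (mu_norm N (prod_roots N z) (z i)) =
     / 2 * ln (INR N) + ln B + (INR N / 2 - 1) * L i - / 2 * D i).
  { intros i Hi. unfold mu_norm, Cnorm. fold B.
    assert (Hc : Cnorm2 (Peval (Pderiv (prod_roots N z)) (z i)) =
       rprod N (fun j => if Nat.eqb i j then 1 else Cnorm2 (Csub (z i) (z j))))
      by (apply Cnorm2_deriv; auto).
    assert (Hpos : forall j, (j < N)%nat -> 0 < (if Nat.eqb i j then 1 else Cnorm2 (Csub (z i) (z j)))).
    { intros j Hj. destruct (Nat.eqb_spec i j); [lra|].
      apply Cnorm2_pos, Csub_neq, Hdist; auto. }
    assert (Hcp : 0 < Cnorm2 (Peval (Pderiv (prod_roots N z)) (z i))) by (rewrite Hc; apply rprod_pos; auto).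
    assert (Hr : 0 < Rpower (1 + Cnorm2 (z i)) (INR N / 2 - 1)) by (unfold Rpower; apply exp_pos).
    assert (Hs : 0 < sqrt (INR N)) by (apply sqrt_lt_R0; auto).
    assert (Hd : 0 < sqrt (Cnorm2 (Peval (Pderiv (prod_roots N z)) (z i)))) by (apply sqrt_lt_R0; auto).
    rewrite ln_div'; [|apply Rmult_lt_0_compat; [apply Rmult_lt_0_compat|]; auto|auto].
    rewrite ln_mult; [|apply Rmult_lt_0_compat|]; auto.
    rewrite ln_mult; auto.
    rewrite !ln_sqrt'; auto. unfold Rpower at 1. rewrite ln_exp.
    rewrite Hc, ln_rprod by auto. unfold D, L.
    rewrite (rsum_ext N (fun j => ln (if Nat.eqb i j then 1 else Cnorm2 (Csub (z i) (z j))))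
       (fun j => if Nat.eqb i j then 0 else dd i j)).
    - ring.
    - intros j Hj. destruct (Nat.eqb i j); auto. apply ln_1. }
  assert (F3 : ln (sqrt (sphere_int (fun p => rprod N (fun j => dist3 p (x j) ^ 2)))) =
     / 2 * (INR N * ln 4 - SL + 2 * ln B - ln (INR N + 1))).
  { rewrite (sphere_int_val N z x Hx). rewrite <- bw_sq. fold B.
    assert (HK : forall j, (j < N)%nat -> 0 < 4 / (1 + Cnorm2 (z j))).
    { intros j Hj. apply Rdiv_lt_0_compat; [lra|apply opz]. }
    assert (HKp : 0 < Kc N z) by (apply rprod_pos; auto).
    assert (HB2 : 0 < B ^ 2) by (apply pow_lt; auto).
    rewrite ln_sqrt'. 2:{ apply Rdiv_lt_0_compat; [apply Rmult_lt_0_compat; auto|lra]. }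
    rewrite ln_div', ln_mult, ln_pow; auto; try lra; try (apply Rmult_lt_0_compat; auto).
    unfold Kc. rewrite ln_rprod by auto.
    rewrite (rsum_ext N _ (fun j => ln 4 - L j)).
    - rewrite rsum_minus, rsum_const. fold SL. simpl INR. field.
    - intros j Hj. unfold L. rewrite ln_div'; auto; [lra|apply opz]. }
  assert (F4 : ln (sqrt (INR N * (INR N + 1)) / 2) = / 2 * (ln (INR N) + ln (INR N + 1)) - ln 2).
  { rewrite ln_div', ln_sqrt', ln_mult; try lra; try (apply sqrt_lt_R0); apply Rmult_lt_0_compat; lra. }
  unfold E_log.
  rewrite (rsum_ext N _ (fun i => (/ 2 * ln 4 * (INR N - 1) - / 2 * SL) + (/ 2 - / 2 * (INR N - 1)) * L i + / 2 * D i)).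
  2:{ intros i Hi.
      rewrite (rsum_ext N _ (fun j => ((/ 2 * ln 4 - / 2 * L i) + / 2 * (if Nat.eqb i j then 0 else dd i j)
              + (- / 2) * L j) - (if Nat.eqb i j then (/ 2 * ln 4 - / 2 * L i) + (- / 2) * L j else 0))).
      - rewrite rsum_minus, lin3, rsum_delta by auto. unfold D, SL. field.
      - intros j Hj. destruct (Nat.eqb_spec i j).
        + subst. ring.
        + rewrite F1 by auto. field. }
  rewrite lin3.
  rewrite (rsum_ext N (fun i => ln (mu_norm N (prod_roots N z) (z i))) (fun i => (/ 2 * ln (INR N) + ln B) + (INR N / 2 - 1) * L i + (- / 2) * D i)).
  2:{ intros i Hi. rewrite F2 by auto. ring. }
  rewrite lin3, F3, F4, ln4. fold SL. field.
Qed.
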